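(* Let $G$ be a $(P_5,\text{chair})$-free graph and let $C=v_1v_2v_3v_4v_5v_1$ be an induced $C_5$ in $G$. Then for every $1\le i\le 5$, every vertex in $S_4(i)\cup S_5$ is either complete or anticomplete to each connected component of $G[S^2_3(i)]$.
   Context: All graphs are finite and simple; $P_5$ is the path on 5 vertices; the chair is a $P_4$ plus a vertex adjacent to exactly one of the two middle vertices of the $P_4$; ''$H$-free'' means no induced subgraph isomorphic to $H$. Indices modulo 5; for $v\notin V(C)$ let $N_C(v)=N(v)\cap V(C)$. $S^2_3(i)=\{v\notin V(C): N_C(v)=\{v_{i-2},v_i,v_{i+2}\}\}$, $S_4(i)=\{v\notin V(C): N_C(v)=\{v_{i-2},v_{i-1},v_{i+1},v_{i+2}\}\}$, $S_5=\{v\notin V(C): N_C(v)=V(C)\}$. A vertex is complete (anticomplete) to a set if it is adjacent (nonadjacent) to every vertex of the set. *)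

(* Defs.v *)
From mathcomp Require Import all_boot.
Set Implicit Arguments. Unset Strict Implicit. Unset Printing Implicit Defensive.

Definition simple_graph (T : finType) (e : rel T) : Prop :=
  symmetric e /\ irreflexive e.

Definition induced_free (T : finType) (e : rel T) (n : nat) (h : rel 'I_n) : Prop :=
  ~ exists f : 'I_n -> T, injective f /\ forall a b, e (f a) (f b) = h a b.

Definition P5_rel : rel 'I_5 :=
  fun a b => (a.+1 == b :> nat) || (b.+1 == a :> nat).

Definition chair_edge (a b : nat) : bool :=
  ((a == 0) && (b == 1)) || ((a == 1) && (b == 2)) ||
  ((a == 2) && (b == 3)) || ((a == 1) && (b == 4)).
Definition chair_rel : rel 'I_5 := fun a b => chair_edge a b || chair_edge b a.

(* indices modulo 5 (vertices of C numbered 0..4) *)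
Definition shift (i : 'I_5) (k : nat) : 'I_5 := Ordinal (ltn_pmod (i + k) (isT : 0 < 5)).

Definition induced_C5 (T : finType) (e : rel T) (v : 'I_5 -> T) : Prop :=
  injective v /\ forall a b : 'I_5, e (v a) (v b) = (b == shift a 1) || (a == shift b 1).

Definition VC (T : finType) (v : 'I_5 -> T) : {set T} := [set v j | j : 'I_5].

Definition NC (T : finType) (e : rel T) (v : 'I_5 -> T) (u : T) : {set T} :=
  [set w in VC v | e u w].

(* S^2_3(i) = {u notin C : N_C(u) = {v_{i-2}, v_i, v_{i+2}}} *)
Definition S23 (T : finType) (e : rel T) (v : 'I_5 -> T) (i : 'I_5) : {set T} :=
  [set u | (u \notin VC v) && (NC e v u == [set v (shift i 3); v i; v (shift i 2)])].

(* S_4(i) = {u notin C : N_C(u) = {v_{i-2}, v_{i-1}, v_{i+1}, v_{i+2}}} *)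
Definition S4 (T : finType) (e : rel T) (v : 'I_5 -> T) (i : 'I_5) : {set T} :=
  [set u | (u \notin VC v) &&
     (NC e v u == [set v (shift i 3); v (shift i 4); v (shift i 1); v (shift i 2)])].

Definition S5 (T : finType) (e : rel T) (v : 'I_5 -> T) : {set T} :=
  [set u | (u \notin VC v) && (NC e v u == VC v)].

Definition induced_rel (T : finType) (e : rel T) (S : {set T}) : rel T :=
  fun a b => [&& e a b, a \in S & b \in S].

Definition component (T : finType) (e : rel T) (S : {set T}) (x : T) : {set T} :=
  [set y | connect (induced_rel e S) x y].

Definition complete_to (T : finType) (e : rel T) (u : T) (A : {set T}) : Prop :=
  forall y, y \in A -> e u y.
Definition anticomplete_to (T : finType) (e : rel T) (u : T) (A : {set T}) : Prop :=
  forall y, y \in A -> ~~ e u y.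

(* Main.v *)
Require Import Defs.
From mathcomp Require Import all_boot.

Lemma shift_facts (i : 'I_5) :
 [&& shift i 1 != shift i 3, shift i 1 != i, shift i 1 != shift i 2,
     shift i 4 != shift i 3, shift i 4 != i, shift i 4 != shift i 2,
     shift i 4 != shift (shift i 1) 1, shift i 1 != shift (shift i 4) 1 & shift i 1 != shift i 4].
Proof. by case: i => [[|[|[|[|[|n]]]]] Hi]. Qed.

Theorem mainTheorem6 (T : finType) (e : rel T) (v : 'I_5 -> T) :
  simple_graph e ->
  induced_free e P5_rel ->
  induced_free e chair_rel ->
  induced_C5 e v ->
  forall (i : 'I_5) (u : T), u \in S4 e v i :|: S5 e v ->
  forall x : T, x \in S23 e v i ->
    complete_to e u (component e (S23 e v i) x) \/
    anticomplete_to e u (component e (S23 e v i) x).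
Proof.
move=> [Hsym Hirr] _ Hchair [Hinj HC] i u Hu x Hx.
set S := S23 e v i.
have vVC : forall j, v j \in VC v by move=> j; apply/imsetP; exists j.
have inNC : forall t j, (v j \in NC e v t) = e t (v j).
  by move=> t j; rewrite /NC inE vVC.
have nadj : forall t j, t \in S -> e t (v j) ->
    [|| j == shift i 3, j == i | j == shift i 2].
  move=> t j; rewrite inE => /andP[_ /eqP H]; rewrite -inNC H !inE !(inj_eq Hinj).
  by rewrite -orbA.
have key : forall a b, a \in S -> b \in S -> e a b -> e u a -> ~~ e u b -> False.
  move=> a b aS bS eab ua nub.
  have/and5P[f13 f1i f12 f43 /and5P[f4i f42 f41 f14 f1n4]] := shift_facts i.
  set w1 := v (shift i 1); set w4 := v (shift i 4).
  have [uw1 uw4] : e u w1 /\ e u w4.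
    move: Hu; rewrite inE => /orP [] ; rewrite inE => /andP [_ /eqP H];
      by rewrite -!inNC H ?vVC // !inE !eqxx !orbT.
  have nw : forall t, t \in S -> ~~ e t w1 && ~~ e t w4.
    move=> t tS; apply/andP; split; apply/negP => /(nadj _ _ tS);
      by rewrite ?(negbTE f13) ?(negbTE f1i) ?(negbTE f12) ?(negbTE f43) ?(negbTE f4i) ?(negbTE f42).
  have/andP[aw1 aw4] := nw a aS; have/andP[bw1 bw4] := nw b bS.
  have w14 : e w1 w4 = false by rewrite HC (negbTE f41) (negbTE f14).
  apply: Hchair.
  pose f (k : 'I_5) := match val k with 0 => w1 | 1 => u | 2 => a | 3 => b | _ => w4 end.
  have nVC : forall t, t \in S4 e v i :|: S5 e v :|: S -> forall j, t != v j.
    move=> t; rewrite !inE -!orbA => /or3P[] /andP[H _] j;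
      by apply: contraNneq H => ->.
  have nu : forall j, u != v j by apply: nVC; rewrite inE Hu.
  have na : forall j, a != v j by apply: nVC; rewrite inE aS orbT.
  have nb : forall j, b != v j by apply: nVC; rewrite inE bS orbT.
  have d14 : w1 != w4 by rewrite (inj_eq Hinj).
  have dua : u != a by apply/eqP => E1; move: ua; rewrite E1 Hirr.
  have dab : a != b by apply/eqP => E1; move: eab; rewrite E1 Hirr.
  have dub : u != b by apply/eqP => E1; move: bw1; rewrite -E1 uw1.
  have d1u : u != w1 := nu _. have d4u : u != w4 := nu _.
  have d1a : a != w1 := na _. have d4a : a != w4 := na _.
  have d1b : b != w1 := nb _. have d4b : b != w4 := nb _.
  exists f; split.
    move=> p q; apply: contra_eq.
    case: p => [[|[|[|[|[|?]]]]] ?] //; case: q => [[|[|[|[|[|?]]]]] ?] //= _;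
      rewrite /f /= ?(eq_sym w1) ?(eq_sym w4) ?(eq_sym u) ?(eq_sym a) //;
      first [done | by rewrite eq_sym].
  move: aw1 aw4 bw1 bw4 nub => /negbTE aw1 /negbTE aw4 /negbTE bw1 /negbTE bw4 /negbTE nub.
  move=> p q.
  case: p => [[|[|[|[|[|?]]]]] ?] //; case: q => [[|[|[|[|[|?]]]]] ?] //;
    rewrite /f /chair_rel /chair_edge /= ?Hirr //;
    first [done | by rewrite Hsym].
have Hpath : forall (P : pred T) p a, path (induced_rel e S) a p -> P a ->
    ~~ P (last a p) -> exists a' b', [/\ induced_rel e S a' b', P a' & ~~ P b'].
  move=> P; elim=> [|b p IH] a /=; first by move=> _ Pa; rewrite Pa.
  move=> /andP[Hab Hp] Pa; case Pb: (P b); first exact: IH Hp Pb.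
  by move=> _; exists a, b; rewrite Pb.
case Hux: (e u x).
- left; move=> z; rewrite inE => /connectP [p Hp ->].
  apply/negPn/negP => Hn.
  have [a [b [/and3P [eab aS bS] Ha Hb]]] := Hpath (fun t => e u t) p x Hp Hux Hn.
  exact: key a b aS bS eab Ha Hb.
- right; move=> z; rewrite inE => /connectP [p Hp ->].
  apply/negP => Hn.
  have [|a [b [/and3P [eab aS bS] Ha Hb]]] :=
    Hpath (fun t => ~~ e u t) p x Hp (negbT Hux) _; first by rewrite negbK.
  apply: (key b a bS aS _ _ Ha); first by rewrite Hsym.
  by rewrite negbK in Hb.
Qed.
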